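(* Let $m,g>0$ and $0<c<1$, and consider the hybrid system on $(x,y)\in T^*\mathbb{R}^+$: $$\dot x=\tfrac{1}{m}y,\quad \dot y=-mg\quad (x>0);\qquad (x,y)\mapsto(x,-c^2y)\quad (x=0,\ y<0).$$ For initial data $(x_0,y_0)$ with $x_0\ge 0$ (and $y_0>0$ if $x_0=0$) let $\zeta(x_0,y_0)$ be the Zeno time, i.e. the limit of the impact times: $$\zeta(x_0,y_0)=\frac{1}{mg}\Big(y_0+\sqrt{y_0^2+2m^2gx_0}\Big)+\frac{2c^2}{mg(1-c^2)}\sqrt{y_0^2+2m^2gx_0}.$$ Fix $y_0>0$ and consider the trajectory from $(0,y_0)$, with Zeno time $t_Z=\frac{2y_0}{mg(1-c^2)}$. Let $\Phi(t)$ be the state-transition matrix of the hybrid variational equation $\delta\dot z=A\,\delta z$ between impacts and $\delta z^+=J(y^-)\,\delta z^-$ at impacts, where $$A=\begin{bmatrix}0&1/m\\0&0\end{bmatrix},\qquad J(y)=\begin{bmatrix}-c^2&0\\-\frac{m^2g}{y}(1+c^2)&-c^2\end{bmatrix},$$ $y^-<0$ being the momentum just before the impact, and $\Phi(0)=I$. Then the limit $\Phi_Z=\lim_{t\nearrow t_Z}\Phi(t)$ exists and equals $$\Phi_Z=\begin{bmatrix}0&0\\ \frac{m^2g}{y_0}\frac{1+c^2}{1-c^2}&\frac{2}{1-c^2}\end{bmatrix},$$ so $\det\Phi_Z=0$, and moreover $\ker d\zeta_{(0,y_0)}=\ker\Phi_Z$ (both spanned by $(-2y_0,\ m^2g(1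+c^2))^\top$).
   Context: $J(y)$ is the saltation (hybrid Jacobian) matrix of the reset at the guard $x=0$. The product defining $\Phi$ multiplies successive factors on the left. *)

(* Defs.v *)
From HB Require Import structures.
From mathcomp Require Import all_boot all_order all_algebra.
From mathcomp Require Import all_classical all_reals all_analysis.
Set Implicit Arguments. Unset Strict Implicit. Unset Printing Implicit Defensive.
Import Order.TTheory GRing.Theory Num.Theory.
Local Open Scope ring_scope.

Section BouncingBall.
Variable R : realType.

Definition mx2 (a b c d : R) : 'M[R]_2 :=
  \matrix_(i < 2, j < 2)
    if (i : nat) == 0%N then (if (j : nat) == 0%N then a else b)
    else (if (j : nat) == 0%N then c else d).

Definition col2 (a b : R) : 'cV[R]_2 :=
  \col_(i < 2) if (i : nat) == 0%N then a else b.

Definition Amat (m : R) : 'M[R]_2 := mx2 0 m^-1 0 0.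

(* exp(s A) = I + s A, since A^2 = 0 *)
Definition flowA (m s : R) : 'M[R]_2 := 1%:M + s *: Amat m.

Definition Jmat (m g c y : R) : 'M[R]_2 :=
  mx2 (- c ^+ 2) 0 (- (m ^+ 2 * g / y) * (1 + c ^+ 2)) (- c ^+ 2).

(* post-impact momenta along the trajectory from (0, y0):
   yplus 0 = y0 (initial momentum); yplus (k+1) = - c^2 * (pre-impact momentum) *)
Fixpoint yplus (c y0 : R) (k : nat) : R :=
  match k with
  | 0%N => y0
  | k'.+1 => - c ^+ 2 * (- yplus c y0 k')
  end.

(* momentum just before the (k+1)-th impact: a flight started at x = 0
   with momentum p > 0 returns to x = 0 with momentum -p *)
Definition yminus (c y0 : R) (k : nat) : R := - yplus c y0 k.

(* duration of a flight started at x = 0 with momentum p: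
   x(t) = p t / m - g t^2 / 2 vanishes again at t = 2 p / (m g) *)
Definition flight (m g p : R) : R := 2 * p / (m * g).

(* t_0 = 0; t_(k+1) = time of the (k+1)-th impact *)
Definition impact_time (m g c y0 : R) (k : nat) : R :=
  \sum_(j < k) flight m g (yplus c y0 j).

(* state-transition matrix just after the k-th impact (P 0 = I);
   successive factors multiply on the left *)
Fixpoint Pimp (m g c y0 : R) (k : nat) : 'M[R]_2 :=
  match k with
  | 0%N => 1%:M
  | k'.+1 => Jmat m g c (yminus c y0 k') *m flowA m (flight m g (yplus c y0 k'))
               *m Pimp m g c y0 k'
  end.

Definition zeta (m g c : R) (z : 'cV[R]_2) : R :=
  let x0 := z 0 0 in let y0 := z 1 0 in
  (m * g)^-1 * (y0 + Num.sqrt (y0 ^+ 2 + 2 * m ^+ 2 * g * x0))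
  + 2 * c ^+ 2 / (m * g * (1 - c ^+ 2)) * Num.sqrt (y0 ^+ 2 + 2 * m ^+ 2 * g * x0).

End BouncingBall.

(* Main.v *)
Require Import Defs.
From HB Require Import structures.
From mathcomp Require Import all_boot all_order all_algebra.
From mathcomp Require Import all_classical all_reals all_analysis.
From mathcomp Require Import ring lra.
Import Order.TTheory GRing.Theory Num.Theory.
Import numFieldNormedType.Exports.
Local Open Scope classical_set_scope.
Local Open Scope ring_scope.
Set Implicit Arguments. Unset Strict Implicit.

Section Aux.
Variable R : realType.
Implicit Types a b c d e f g h : R.

Lemma mx2_mul a b c d e f g h : mx2 a b c d *m mx2 e f g h =
  mx2 (a*e+b*g) (a*f+b*h) (c*e+d*g) (c*f+d*h).
Proof.
apply/matrixP=> i j; rewrite !mxE !big_ord_recr big_ord0 /= !mxE add0r.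
by case: i => [[|[|i]] Hi]; case: j => [[|[|j]] Hj].
Qed.

Lemma flowA_mx2 (m s : R) : flowA m s = mx2 1 (s/m) 0 1.
Proof.
apply/matrixP=> i j; rewrite !mxE.
case: i => [[|[|i]] Hi]; case: j => [[|[|j]] Hj] //=; rewrite ?mulr0 ?addr0 ?add0r //.
Qed.

Lemma mx2_col2 a b c d (x y : R) : mx2 a b c d *m col2 x y = col2 (a*x+b*y) (c*x+d*y).
Proof.
apply/matrixP=> i j; rewrite !mxE !big_ord_recr big_ord0 /= !mxE add0r.
by case: i => [[|[|i]] Hi].
Qed.

Lemma col2_eq0 (x y : R) : col2 x y = 0 <-> x = 0 /\ y = 0.
Proof.
split.
  move/matrixP=> H; split.
    by have := H 0 0; rewrite !mxE.
  by have := H 1 0; rewrite !mxE.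
case=> -> ->; apply/matrixP => i j; rewrite !mxE; by case: ((i:nat) == 0%N).
Qed.

Lemma col2E (v : 'cV[R]_2) : v = col2 (v 0 0) (v 1 0).
Proof.
apply/matrixP => i j; rewrite !mxE; rewrite (ord1 j).
by case: i => [[|[|i]] Hi] //=; congr (v _ _); apply/val_inj.
Qed.

Lemma det_mx2_00 c d : \det (mx2 0 0 c d) = 0.
Proof.
rewrite (expand_det_row _ 0) big1 // => j _; rewrite !mxE /= if_same mul0r //.
Qed.
End Aux.
Section Aux2.
Variable R : realType.
Variables (m g c y0 : R).
Hypotheses (hm : 0 < m) (hg : 0 < g) (hc0 : 0 < c) (hc1 : c < 1) (hy0 : 0 < y0).

Lemma yplusE k : yplus c y0 k = (c ^+ 2) ^+ k * y0.
Proof. elim: k => [|k IH] /=; first by rewrite expr0 mul1r.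
rewrite IH [_ ^+ k.+1]exprS; set a := _ ^+ k; ring. Qed.

Lemma c2_lt1 : c ^+ 2 < 1.
Proof. by rewrite expr_lt1 // ltW. Qed.

Lemma omc2_neq0 : 1 - c ^+ 2 != 0.
Proof. by rewrite subr_eq0 eq_sym lt_eqF // c2_lt1. Qed.

Lemma impact_timeE k : impact_time m g c y0 k =
  2 * y0 / (m * g * (1 - c ^+ 2)) * (1 - (c ^+ 2) ^+ k).
Proof.
rewrite /impact_time; elim: k => [|k IH]; first by rewrite big_ord0 expr0 subrr mulr0.
rewrite big_ord_recr /= IH /flight yplusE [_ ^+ k.+1]exprS; set a := _ ^+ k.
have := omc2_neq0; have mn : m != 0 by rewrite gt_eqF.
have gn : g != 0 by rewrite gt_eqF.
move=> h; field; rewrite ?mn ?gn ?h //.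
Qed.

Definition q := m ^+ 2 * g.
Definition rr := (1 - c ^+ 2)^-1.
Definition u := (1 + c ^+ 2) * rr.

Definition Pcl (a : R) := mx2 (a * (a - (1 - a) * u)) (- (a * (1 - a) * 2 * y0 * rr / q))
   (q / y0 * (1 - a) * u) (a + (1 - a) * 2 * rr).

Lemma PimpE k : Pimp m g c y0 k = Pcl ((c ^+ 2) ^+ k).
Proof.
elim: k => [|k IH].
  rewrite /= /Pcl expr0 subrr !(mul0r, mulr0, oppr0, addr0, mul1r, subr0).
  apply/matrixP => i j; rewrite !mxE.
  by case: i => [[|[|i]] Hi]; case: j => [[|[|j]] Hj].
rewrite /= IH /yminus yplusE flowA_mx2 /Jmat /flight !mx2_mul /Pcl /u /rr /q [_ ^+ k.+1]exprS.
have := omc2_neq0; have mn : m != 0 by rewrite gt_eqF.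
have gn : g != 0 by rewrite gt_eqF.
have yn : y0 != 0 by rewrite gt_eqF.
have an : (c ^+ 2) ^+ k != 0 by rewrite expf_neq0 // sqrf_eq0 gt_eqF.
move=> h; set a := _ ^+ k in an *.
congr mx2; field; rewrite ?mn ?gn ?h ?yn ?an //.
Qed.
Lemma bnd00 (a Z u : R) : 0 <= a -> a <= 1 -> 0 <= Z -> Z <= 2 * a -> 0 <= u ->
  `|a * (a - (1 - a) * u) + Z * (1 - a) * u| <= (1 + 3 * u) * a.
Proof.
move=> a0 a1 Z0 Z1 u0.
have h1 : 0 <= 1 - a by lra.
have h2 : 0 <= 2 * a - Z by lra.
have h3 : 0 <= a * (1 - a) * u by rewrite !mulr_ge0.
have h4 : 0 <= (2 * a - Z) * (1 - a) * u by rewrite !mulr_ge0.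
have h5 : 0 <= Z * (1 - a) * u by rewrite !mulr_ge0.
have h6 : 0 <= a * a * u by rewrite !mulr_ge0.
have h7 : 0 <= a * (1 - a) by rewrite !mulr_ge0.
have h8 : 0 <= a * a by rewrite !mulr_ge0.
rewrite ler_norml; apply/andP; split; nra.
Qed.
Lemma bnd01 (a Z r : R) : 0 <= a -> a <= 1 -> 0 <= Z -> Z <= 2 * a -> 0 <= r ->
  `|a * (1 - a) * 2 * r - Z * (a + (1 - a) * 2 * r)| <= (2 + 6 * r) * a.
Proof.
move=> a0 a1 Z0 Z1 r0.
have h1 : 0 <= 1 - a by lra.
have h2 : 0 <= 2 * a - Z by lra.
have h3 : 0 <= a * (1 - a) * r by rewrite !mulr_ge0.
have h4 : 0 <= (2 * a - Z) * (a + (1 - a) * 2 * r) by rewrite !mulr_ge0 // addr_ge0 // !mulr_ge0.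
have h5 : 0 <= Z * (a + (1 - a) * 2 * r) by rewrite !mulr_ge0 // addr_ge0 // !mulr_ge0.
have h6 : 0 <= a * a * r by rewrite !mulr_ge0.
have h7 : 0 <= a * (1 - a) by rewrite !mulr_ge0.
have h8 : 0 <= a * a by rewrite !mulr_ge0.
rewrite ler_norml; apply/andP; split; nra.
Qed.
Lemma bnd11 (a r : R) : 0 <= a -> 0 <= r ->
  `|a * (2 * r - 1)| <= (2 * r + 1) * a.
Proof.
move=> a0 r0; have h : 0 <= a * r by rewrite mulr_ge0.
rewrite ler_norml; apply/andP; split; nra.
Qed.

Definition tZ := 2 * y0 / (m * g * (1 - c ^+ 2)).
Definition PhiZ := mx2 0 0 (m ^+ 2 * g / y0 * ((1 + c ^+ 2) / (1 - c ^+ 2)))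
                      (2 / (1 - c ^+ 2)).
Definition CC := (1 + 3 * u) + y0 / q * (2 + 6 * rr) + q / y0 * u + (2 * rr + 1).

Lemma rr_gt0 : 0 < rr.
Proof. by rewrite invr_gt0 subr_gt0 c2_lt1. Qed.
Lemma u_gt0 : 0 < u.
Proof. by rewrite mulr_gt0 ?rr_gt0 // ltr_pwDl // sqr_ge0. Qed.
Lemma q_gt0 : 0 < q.
Proof. by rewrite mulr_gt0 // exprn_gt0. Qed.

Lemma Phi_bound k t : impact_time m g c y0 k <= t < impact_time m g c y0 k.+1 ->
  forall i j, `|PhiZ i j - (flowA m (t - impact_time m g c y0 k) *m Pimp m g c y0 k) i j|
    <= CC * (c ^+ 2) ^+ k.
Proof.
rewrite !impact_timeE => /andP [h1 h2] i j.
rewrite flowA_mx2 PimpE /Pcl mx2_mul.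
set a := (c ^+ 2) ^+ k in h1 h2 *.
have a0 : 0 <= a by rewrite exprn_ge0 // sqr_ge0.
have a1 : a <= 1 by rewrite exprn_ile1 // ?sqr_ge0 // ltW // c2_lt1.
have mn : m != 0 by rewrite gt_eqF.
have gn : g != 0 by rewrite gt_eqF.
have yn : y0 != 0 by rewrite gt_eqF.
have hc := omc2_neq0.
set z := (t - _) / m.
set Z := z * q / y0.
have Z0 : 0 <= Z.
  apply: divr_ge0; last exact: ltW.
  apply: mulr_ge0; last exact: ltW q_gt0.
  by apply: divr_ge0; [rewrite subr_ge0 | apply: ltW].
have Z1 : Z <= 2 * a.
  have -> : Z = (t - 2 * y0 / (m * g * (1 - c ^+ 2)) * (1 - a)) * (m * g / y0).
    rewrite /Z /z /q; field; rewrite ?mn ?gn ?yn ?hc //.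
  have K0 : 0 <= m * g / y0 by apply: divr_ge0; [apply: mulr_ge0|]; apply: ltW.
  apply: le_trans (ler_wpM2r K0 (lerB (ltW h2) (lexx _))) _.
  rewrite [_ ^+ k.+1]exprS -/a.
  rewrite le_eqVlt; apply/orP; left; apply/eqP; field; rewrite ?mn ?gn ?yn ?hc //.
have rr0 := rr_gt0; have q0 := q_gt0; have u0 := u_gt0.
have C0 : 0 <= 1 + 3 * u by lra.
have C1 : 0 <= y0 / q * (2 + 6 * rr).
  by apply: mulr_ge0; [apply: divr_ge0; apply: ltW | lra].
have C2 : 0 <= q / y0 * u.
  by apply: mulr_ge0; [apply: divr_ge0; apply: ltW | lra].
have C3 : 0 <= 2 * rr + 1 by lra.
rewrite /PhiZ /mx2 !mxE.
case: i => [[|[|i]] Hi]; case: j => [[|[|j]] Hj] //=.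
- apply: le_trans (_ : (1 + 3 * u) * a <= _); last by rewrite ler_wpM2r // /CC; lra.
  rewrite sub0r normrN.
  have -> : 1 * (a * (a - (1 - a) * u)) + z * (q / y0 * (1 - a) * u) =
     a * (a - (1 - a) * u) + Z * (1 - a) * u.
    rewrite /Z; field; rewrite ?yn //.
  by apply: bnd00 => //; apply: ltW u_gt0.
- apply: le_trans (_ : y0 / q * ((2 + 6 * rr) * a) <= _); last first.
    by rewrite mulrA ler_wpM2r // /CC; lra.
  have -> : 0 - (1 * - (a * (1 - a) * 2 * y0 * rr / q) + z * (a + (1 - a) * 2 * rr)) =
     y0 / q * (a * (1 - a) * 2 * rr - Z * (a + (1 - a) * 2 * rr)).
    rewrite /Z; field; rewrite ?yn ?gt_eqF ?q_gt0 //.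
  rewrite normrM ger0_norm ?mulr_ge0 ?invr_ge0 ?(ltW q_gt0) ?(ltW hy0) //.
  by rewrite ler_wpM2l ?mulr_ge0 ?invr_ge0 ?(ltW q_gt0) ?(ltW hy0) // bnd01 // ltW // rr_gt0.
- apply: le_trans (_ : q / y0 * u * a <= _); last by rewrite ler_wpM2r // /CC; lra.
  have -> : m ^+ 2 * g / y0 * ((1 + c ^+ 2) / (1 - c ^+ 2)) -
     (0 * (a * (a - (1 - a) * u)) + 1 * (q / y0 * (1 - a) * u)) = q / y0 * u * a.
    rewrite /q /u /rr; field; rewrite ?yn ?hc //.
  by rewrite ger0_norm // mulr_ge0.
- apply: le_trans (_ : (2 * rr + 1) * a <= _); last by rewrite ler_wpM2r // /CC; lra.
  have -> : 2 / (1 - c ^+ 2) - (0 * - (a * (1 - a) * 2 * y0 * rr / q) + 1 * (a + (1 - a) * 2 * rr)) = a * (2 * rr - 1).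
    rewrite /rr; field; rewrite ?hc ?gt_eqF //.
  by apply: bnd11 => //; apply: ltW rr_gt0.
Qed.
Lemma tZ_gt0 : 0 < tZ.
Proof.
rewrite /tZ; apply: divr_gt0; first by rewrite mulr_gt0.
by rewrite !mulr_gt0 // subr_gt0 c2_lt1.
Qed.

Lemma exists_k t : 0 <= t -> t < tZ -> exists k,
  impact_time m g c y0 k <= t < impact_time m g c y0 k.+1.
Proof.
move=> t0 tlt.
have ep : 0 < (tZ - t) / tZ by rewrite divr_gt0 ?subr_gt0 ?tZ_gt0.
have : `|c ^+ 2| < 1 by rewrite ger0_norm ?c2_lt1 // exprn_ge0 // ltW.
move/cvg_expr/cvgrPdist_lt => /(_ _ ep) [N _ HN].
have := HN N (leqnn N); rewrite sub0r normrN ger0_norm => [hN|]; last by rewrite exprn_ge0 // sqr_ge0.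
have Pn : (fun n => t < impact_time m g c y0 n) N.
  rewrite /= impact_timeE -/tZ.
  rewrite ltr_pdivlMr ?tZ_gt0 // in hN.
  have := tZ_gt0; nra.
have [n0 Hn0 Hmin] := ex_minnP (ex_intro (fun n => is_true (t < impact_time m g c y0 n)) N Pn).
case: n0 Hn0 Hmin => [|k] Hn0 Hmin.
  by move: Hn0; rewrite /impact_time big_ord0 ltNge t0.
exists k; rewrite Hn0 andbT leNgt; apply/negP => H.
by have := Hmin k H; rewrite ltnn.
Qed.

Lemma a_bound k t : t < impact_time m g c y0 k.+1 ->
  (c ^+ 2) ^+ k <= (tZ - t) / (tZ * c ^+ 2).
Proof.
rewrite impact_timeE -/tZ [_ ^+ k.+1]exprS => h.
have c2 : 0 < c ^+ 2 by rewrite exprn_gt0.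
rewrite ler_pdivlMr; last by rewrite mulr_gt0 // tZ_gt0.
have := tZ_gt0; set a := _ ^+ k in h *; nra.
Qed.

Lemma Phi_lim (Phi : R -> 'M[R]_2)
  (HPhi : forall (k : nat) (t : R),
      impact_time m g c y0 k <= t < impact_time m g c y0 k.+1 ->
      Phi t = flowA m (t - impact_time m g c y0 k) *m Pimp m g c y0 k) :
  Phi t @[t --> tZ^'-] --> PhiZ.
Proof.
have CC0 : 0 < CC.
  have rr0 := rr_gt0; have q0 := q_gt0; have u0 := u_gt0.
  have C1 : 0 <= y0 / q * (2 + 6 * rr).
    by apply: mulr_ge0; [apply: divr_ge0; apply: ltW | lra].
  have C2 : 0 <= q / y0 * u.
    by apply: mulr_ge0; [apply: divr_ge0; apply: ltW | lra].
  rewrite /CC; lra.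
have tZ0 := tZ_gt0.
have c2 : 0 < c ^+ 2 by rewrite exprn_gt0.
apply/cvgrPdist_le => e e0.
have d0 : 0 < e * (tZ * c ^+ 2) / CC by apply: divr_gt0 => //; apply: mulr_gt0 => //; apply: mulr_gt0.
near=> t.
have t0 : 0 <= t by near: t; apply: nbhs_left_ge.
have tlt : t < tZ by near: t; apply: nbhs_left_lt.
have td : tZ - t < e * (tZ * c ^+ 2) / CC by near: t; apply: nbhs_left_ltBl.
have [k /andP [hk1 hk2]] := exists_k t0 tlt.
rewrite (HPhi k t) ?hk1 ?hk2 //.
rewrite /Num.Def.normr /= mx_normrE (bigmax_le _ (ltW e0)) //= => -[i j] _ /=.
set M := flowA _ _ *m _.
have -> : (PhiZ - M) i j = PhiZ i j - M i j.
  by rewrite [LHS]mxE [X in _ + X]mxE.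
apply: le_trans (Phi_bound _ _ _) _; first by rewrite hk1 hk2.
have := a_bound hk2.
have T0 : 0 < tZ * c ^+ 2 by exact: mulr_gt0.
rewrite ler_pdivlMr // => ha.
rewrite ltr_pdivlMr // in td.
have : (c ^+ 2) ^+ k * (tZ * c ^+ 2) * CC <= e * (tZ * c ^+ 2).
  apply: le_trans (ltW td); rewrite ler_wpM2r //; exact: ltW.
set a := _ ^+ k; set T := tZ * c ^+ 2 in T0 *.
move=> H; rewrite mulrC -(ler_pM2r T0); nra.
Unshelve. all: by end_near.
Qed.
End Aux2.
Section D.
Variable R : realType.

Lemma is_diff_coord (p : 'cV[R]_2) (i : 'I_2) (j : 'I_1) :
  is_diff p (fun N : 'cV[R]_2 => N i j) (fun N => N i j).
Proof.
have @f : {linear 'cV[R]_2 -> R}.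
  by exists (fun N : 'M[R]_(_, _) => N i j); do 2![eexists]; do ?[constructor];
     rewrite ?mxE// => ? *; rewrite ?mxE//; move=> ?; rewrite !mxE.
rewrite (_ : (fun _ => _) = f) //.
apply: DiffDef; first exact/linear_differentiable/coord_continuous.
by rewrite diff_lin //; exact: coord_continuous.
Qed.

Lemma is_diff_sqrt (x : R) : 0 < x ->
  is_diff x Num.sqrt (fun t => t *: (2 * Num.sqrt x)^-1).
Proof.
move=> x0; have D := is_derive1_sqrt x0.
apply: DiffDef.
  by apply/derivable1_diffP; exact: ex_derive.
by rewrite deriv1E ?derive1E ?derive_val //; exact: ex_derive.
Qed.

Variables (m g c y0 : R).
Hypotheses (hm : 0 < m) (hg : 0 < g) (hy0 : 0 < y0).

Definition Hf := fun z : 'cV[R]_2 => z 1 0 ^+ 2 + 2 * m ^+ 2 * g * z 0 0.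
Definition dHf := fun v : 'cV[R]_2 => y0 * v 1 0 + y0 * v 1 0 + 2 * m ^+ 2 * g * v 0 0.
Definition Kc := 2 * c ^+ 2 / (m * g * (1 - c ^+ 2)).
Definition dzeta := fun v : 'cV[R]_2 =>
  (m * g)^-1 * (v 1 0 + dHf v * (2 * y0)^-1) + Kc * (dHf v * (2 * y0)^-1).

Lemma is_diff_H : is_diff (col2 0 y0) Hf dHf.
Proof.
have X := is_diff_coord (col2 0 y0) 0 0.
have Y := is_diff_coord (col2 0 y0) 1 0.
have := is_diffD (is_diffM Y Y) (is_diffZ (2 * m ^+ 2 * g) X).
have E1 : (fun N : 'cV[R]_2 => N 1 0) * (fun N => N 1 0) + (2 * m ^+ 2 * g) *: (fun N : 'cV[R]_2 => N 0 0) = Hf.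
  by apply/funext => z /=; rewrite /Hf expr2.
rewrite E1 => H; apply: is_diff_eq H _.
apply/funext => v /=; rewrite /dHf /col2 !mxE /=.
done.
Qed.

Lemma is_diff_zeta : is_diff (col2 0 y0) (zeta m g c) dzeta.
Proof.
have Hp : Hf (col2 0 y0) = y0 ^+ 2.
  by rewrite /Hf /col2 !mxE /= mulr0 addr0.
have Sq : is_diff (Hf (col2 0 y0)) Num.sqrt (fun t => t *: (2 * y0)^-1).
  rewrite Hp; have := is_diff_sqrt (exprn_gt0 2 hy0).
  by rewrite sqrtr_sqr ger0_norm // ltW.
have S := is_diff_comp is_diff_H Sq.
have Y := is_diff_coord (col2 0 y0) 1 0.
have := is_diffD (is_diffZ (m * g)^-1 (is_diffD Y S)) (is_diffZ Kc S).
have E1 : (m * g)^-1 *: ((fun N : 'cV[R]_2 => N 1 0) + (Num.sqrt \o Hf)) + Kc *: (Num.sqrt \o Hf) = zeta m g c.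
  by apply/funext => z /=; rewrite /zeta /Hf /Kc.
rewrite E1 => H; apply: is_diff_eq H _.
by apply/funext => v /=; rewrite /dzeta.
Qed.
End D.

Lemma scale_col2 (R : realType) (a x y : R) : a *: col2 x y = col2 (a * x) (a * y).
Proof. by apply/matrixP => i j; rewrite !mxE; case: ((i : nat) == 0%N). Qed.

Theorem proposition6p7 (R : realType) (m g c y0 : R)
  (hm : 0 < m) (hg : 0 < g) (hc0 : 0 < c) (hc1 : c < 1) (hy0 : 0 < y0)
  (Phi : R -> 'M[R]_2)
  (HPhi : forall (k : nat) (t : R),
      impact_time m g c y0 k <= t < impact_time m g c y0 k.+1 ->
      Phi t = flowA m (t - impact_time m g c y0 k) *m Pimp m g c y0 k) :
  let tZ := 2 * y0 / (m * g * (1 - c ^+ 2)) in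
  let PhiZ := mx2 0 0 (m ^+ 2 * g / y0 * ((1 + c ^+ 2) / (1 - c ^+ 2)))
                      (2 / (1 - c ^+ 2)) in
  let w := col2 (- 2 * y0) (m ^+ 2 * g * (1 + c ^+ 2)) in
  [/\ Phi t @[t --> tZ^'-] --> PhiZ,
      \det PhiZ = 0,
      differentiable (zeta m g c) (col2 0 y0),
      (forall v : 'cV[R]_2, 'd (zeta m g c) (col2 0 y0) v = 0 <-> PhiZ *m v = 0)
    & (forall v : 'cV[R]_2, PhiZ *m v = 0 <-> exists a : R, v = a *: w)].
Proof.
move=> tZ' PhiZ' w'.
have Hd := @is_diff_zeta R m g c y0 hy0.
have mn : m != 0 by rewrite gt_eqF.
have gn : g != 0 by rewrite gt_eqF.
have yn : y0 != 0 by rewrite gt_eqF.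
have hc := omc2_neq0 hc0 hc1.
have cn : 1 + c ^+ 2 != 0 by rewrite gt_eqF // ltr_pwDl // sqr_ge0.
split.
- by apply: Phi_lim.
- exact: det_mx2_00.
- exact: ex_diff.
- move=> v; rewrite diff_val (col2E v) /PhiZ' mx2_col2 col2_eq0.
  set x := v 0 0; set y := v 1 0.
  rewrite /dzeta /dHf /Kc /col2 !mxE /=.
  rewrite !mul0r addr0.
  set A := (m ^+ 2 * g / y0 * ((1 + c ^+ 2) / (1 - c ^+ 2))) * x + 2 / (1 - c ^+ 2) * y.
  have -> : (m * g)^-1 * (y + (y0 * y + y0 * y + 2 * m ^+ 2 * g * x) / (2 * y0)) +
     2 * c ^+ 2 / (m * g * (1 - c ^+ 2)) * ((y0 * y + y0 * y + 2 * m ^+ 2 * g * x) / (2 * y0))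
     = A / (m * g).
    rewrite /A; field; rewrite ?mn ?gn ?yn ?hc //.
  have mgn : (m * g)^-1 != 0 by rewrite invr_eq0 mulf_neq0.
  split; last by case=> _ ->; rewrite mul0r.
  move=> H; split => //; apply/eqP; move/eqP: H.
  by rewrite mulf_eq0 (negbTE mgn) orbF.
- move=> v; rewrite (col2E v) /PhiZ' mx2_col2 col2_eq0 /w'.
  set x := v 0 0; set y := v 1 0.
  rewrite !mul0r addr0.
  split.
    case=> _ H; exists (- x / (2 * y0)).
    have -> : y = - (m ^+ 2 * g / y0 * ((1 + c ^+ 2) / (1 - c ^+ 2))) * x / (2 / (1 - c ^+ 2)).
      apply: (@mulIf _ (2 / (1 - c ^+ 2))); first by rewrite mulf_neq0 ?invr_eq0 // pnatr_eq0.
      rewrite divfK; last by rewrite mulf_neq0 ?invr_eq0 // pnatr_eq0.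
      move: H; set K := m ^+ 2 * g / y0 * _; set B := 2 / _; move=> H; lra.
    rewrite scale_col2; congr col2; field; rewrite ?mn ?gn ?yn ?hc //.
  case=> a; rewrite scale_col2 => /matrixP H; split => //.
  have H0 := H 0 0; have H1 := H 1 0.
  rewrite /col2 !mxE /= in H0 H1.
  rewrite H0 H1; field; rewrite ?mn ?gn ?yn ?hc //.
Qed.
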